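(* Let $\mathbb{S}\in\mathbb{Z}^{N_X\times N_e}$, $\mathcal{X}=\mathbb{R}^{N_X}_{>0}$, $\Phi$ a primal thermodynamic function on $\mathcal{X}$ with conjugate $\Phi^*$, and $\{\Psi^*_x\}_{x\in\mathcal{X}}$ a family of dissipation functions on $\mathbb{R}^{N_e}$ with conjugates $\Psi_x$. Let $j:\mathcal{X}\to\mathbb{R}^{N_e}$ be the flux of a generalized flow $\dot{x}=-\mathbb{S}j(x)$. For $x\in\mathcal{X}$ let $v(x):=-\mathbb{S}j(x)$, let $j^\dagger(x,v(x))$ be the unique minimizer of $\Psi_x$ over $\{j'\in\mathbb{R}^{N_e}:-\mathbb{S}j'=v(x)\}$, let $u_{eq}(x)\in\mathbb{R}^{N_X}$ be any vector with $-\mathbb{S}^Tu_{eq}(x)=\nabla\Psi_x(j^\dagger(x,v(x)))$ (i.e. a representative of $\partial\tilde{\Psi}_x[v(x)]$, with $\tilde{\Psi}_x(v):=\min_{-\mathbb{S}j'=v}\Psi_x(j')$), and define the effective equilibrium flux $j_{eq}(x):=\nabla\Psi^*_x(-\mathbb{S}^Tu_{eq}(x))$. Then $-\mathbb{S}j_{eq}(x)=-\mathbb{S}j(x)$ for all $x$, i.e. $j_{eq}$ induces the same velocity as $j$. Furthermore, for a trajectory $\{x_t\}$ of $\dot x=-\mathbb{S}j(x)$, define $$\tilde{x}_t:=\nabla\Phi^*\big(\nabla\Phi(x_t)+u_{eq}(x_t)\big),\qquad j_{eq}(t,x):=\nabla\Psi^*_x\Big(\mathbb{S}^T\nabla_x\mathcal{D}_\Phi[x\|\tilde{x}_t]\Big).$$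 Then the time-dependent equilibrium flux $j_{eq}(t,x)$ generates the same trajectory: $\dot{x}_t=-\mathbb{S}j_{eq}(t,x_t)$ for all $t$.
   Context: A primal thermodynamic function is a strictly convex differentiable $\Phi:\mathcal{X}\to\mathbb{R}$ such that $\{\nabla\Phi(x):x\in\mathcal{X}\}=\mathbb{R}^{N_X}$ and, for every $x_{in}\in\mathcal{X}$ and $x_{bd}\in\mathbb{R}^{N_X}_{\ge0}\setminus\mathcal{X}$, $\lim_{\lambda\to0^+}\frac{d}{d\lambda}\Phi(\lambda x_{in}+(1-\lambda)x_{bd})=-\infty$; $\Phi^*(y)=\max_{x\in\mathcal{X}}[\langle x,y\rangle-\Phi(x)]$, and $\nabla\Phi,\nabla\Phi^*$ are mutually inverse bijections between $\mathcal{X}$ and $\mathbb{R}^{N_X}$. The Bregman divergence is $\mathcal{D}_\Phi[x\|x']=\Phi(x)-\Phi(x')-\langle x-x',\nabla\Phi(x')\rangle$. A dissipation function on $\mathbb{R}^{N_e}$ is a strictly convex, continuously differentiable, $1$-coercive, even function $\psi$ with $\psi(0)=0$; $\Psi_x$ is the Legendre–Fenchel conjugate of $\Psi^*_x$, and $\nabla\Psi_x,\nabla\Psi^*_x$ are mutually inverse bijections. *)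

(* Defs.v *)
From HB Require Import structures.
From mathcomp Require Import all_boot all_order all_algebra.
From mathcomp Require Import all_classical all_reals all_analysis.
Set Implicit Arguments. Unset Strict Implicit. Unset Printing Implicit Defensive.
Import Order.TTheory GRing.Theory Num.Theory.
Import numFieldNormedType.Exports.
Local Open Scope classical_set_scope.
Local Open Scope ring_scope.

Section Defs.
Variable R : realType.

Definition dotv n (x y : 'cV[R]_n) : R := (x^T *m y) 0 0.

Definition grad n (f : 'cV[R]_n -> R) (x : 'cV[R]_n) : 'cV[R]_n :=
  \col_i ('d f x (delta_mx i 0)).

Definition posOrth n : set 'cV[R]_n := [set x | forall i, 0 < x i 0].
Definition nnegOrth n : set 'cV[R]_n := [set x | forall i, 0 <= x i 0].

Definition strictly_convex_on n (D : set 'cV[R]_n) (f : 'cV[R]_n -> R) :=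
  forall a b : 'cV[R]_n, D a -> D b -> a != b -> forall t : R, 0 < t < 1 ->
    f (t *: a + (1 - t) *: b) < t * f a + (1 - t) * f b.

Definition primal_thermo n (Phi : 'cV[R]_n -> R) :=
  [/\ strictly_convex_on (@posOrth n) Phi,
      (forall x, posOrth x -> differentiable Phi x),
      (forall y : 'cV[R]_n, exists2 x, posOrth x & grad Phi x = y) &
      (forall xin xbd, posOrth xin -> nnegOrth xbd -> ~ posOrth xbd ->
        derive1 (fun l : R => Phi (l *: xin + (1 - l) *: xbd)) l
          @[l --> 0^'+] --> -oo)].

Definition is_conj_on n (Phi Phis : 'cV[R]_n -> R) :=
  forall y, (forall x, posOrth x -> dotv x y - Phi x <= Phis y) /\
            (exists2 x, posOrth x & dotv x y - Phi x = Phis y).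

Definition dissipation m (psi : 'cV[R]_m -> R) :=
  [/\ strictly_convex_on setT psi,
      (forall f, differentiable psi f) /\ continuous (grad psi),
      (forall M : R, exists r : R, forall f, r <= `|f| -> M * `|f| <= psi f),
      (forall f, psi (- f) = psi f) &
      psi 0 = 0].

Definition LF_conj m (psis : 'cV[R]_m -> R) (j : 'cV[R]_m) : R :=
  sup (range (fun f => dotv j f - psis f)).

Definition bregman n (Phi : 'cV[R]_n -> R) (x x' : 'cV[R]_n) : R :=
  Phi x - Phi x' - dotv (x - x') (grad Phi x').

End Defs.

(* Main.v *)
Require Import Defs.
From HB Require Import structures.
From mathcomp Require Import all_boot all_order all_algebra.
From mathcomp Require Import all_classical all_reals all_analysis.
Import Order.TTheory GRing.Theory Num.Theory.
Import numFieldNormedType.Exports.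
Local Open Scope classical_set_scope.
Local Open Scope ring_scope.

Lemma diff_aux (R : realType) (V : normedModType R) (f : V -> R^o) (L : {linear V -> R^o})
  (c d : R) (x v : V) :
  differentiable f x -> continuous L ->
  'd (f - cst c - ((L : V -> R^o) - cst d)) x v = 'd f x v - L v.
Proof.
move=> df Lc.
have dL : differentiable L x by exact: linear_differentiable.
have d1 : differentiable (f - cst c) x.
  apply: differentiableB => //.
have d2 : differentiable ((L : V -> R^o) - cst d) x.
  by apply: differentiableB.
have E := diffB d1 d2.
have E' := congr1 (fun h => h v) E.
simpl in E'.
apply: etrans; first exact: E'.
have F1 := congr1 (fun h => h v) (diffB df (differentiable_cst c x)).
have F2 := congr1 (fun h => h v) (diffB dL (differentiable_cst d x)).
have F3 := congr1 (fun h => h v) (diff_lin x Lc).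
have F4 := congr1 (fun h => h v) (@diff_cst _ V R^o c x).
have F5 := congr1 (fun h => h v) (@diff_cst _ V R^o d x).
simpl in F1, F2, F3, F4, F5.
apply: etrans; first exact: (congr2 (fun a b => a - b) F1 F2).
apply: etrans; first exact: (congr2 (fun a b => a - b) (congr1 (fun z => 'd f x v - z) F4) (congr2 (fun a b => a - b) F3 F5)).
have H : forall a b : R, (a - 0) - (b - 0) = a - b by move=> a b; rewrite !subr0.
exact: H.
Qed.

Lemma grad_bregman (R : realType) n (Phi : 'cV[R]_n -> R) x x' :
  differentiable Phi x ->
  grad (fun y => bregman Phi y x') x = grad Phi x - grad Phi x'.
Proof.
move=> dP.
set g := grad Phi x'.
have Llin : linear (fun y : 'cV[R]_n => dotv y g).
  move=> a u v; rewrite /dotv linearP /= mulmxDl -scalemxAl !mxE.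
  by [].
pose LM := GRing.isLinear.Build _ _ _ _ _ Llin.
pose L : {linear 'cV[R]_n -> R} := HB.pack (fun y : 'cV[R]_n => dotv y g) LM.
have LE : forall y, L y = \sum_k g k 0 * y k 0.
  move=> y; rewrite /= /dotv !mxE; apply: eq_bigr => k _; rewrite !mxE mulrC.
  by [].
have Lc : continuous L.
  have -> : (L : _ -> _) = \sum_(k < n) (fun y : 'cV[R]_n => g k 0 * y k 0).
    apply/funext => y; rewrite LE; elim/big_rec2: _ => //.
    by move=> k a f _ ->.
  elim/big_ind: _.
  - by move=> y; exact: cst_continuous.
  - by move=> f1 f2 c1 c2 y; apply: continuousD; [apply: c1|apply: c2].
  - move=> k _ y; apply: (@continuousM _ _ (cst (g k 0)) (fun y : 'cV[R]_n => y k 0)).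
      exact: cst_continuous.
    exact: coord_continuous.
have -> : (fun y => bregman Phi y x') =
   (Phi - cst (Phi x')) - ((L : _ -> _) - cst (L x')).
  apply/funext => y; rewrite /bregman /= !fctE.
  congr (_ - _); rewrite /dotv linearB /= mulmxBl !mxE. done.
have dL : differentiable L x by exact: linear_differentiable.
rewrite /grad; apply/eqP; rewrite -(inj_eq (@trmx_inj _ _ _)) ; apply/eqP/rowP => i. rewrite !mxE.
apply: etrans; first exact: diff_aux.
congr (_ - _); rewrite LE.
rewrite (bigD1 i) //= big1 ?addr0.
  by rewrite !mxE !eqxx mulr1.
by move=> l /negbTE nl; rewrite !mxE nl mulr0.
Qed.

Theorem mainTheorem10 (R : realType) (NX Ne : nat) (S : 'M[int]_(NX, Ne))
  (Phi Phis : 'cV[R]_NX -> R)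
  (Psis Psi : 'cV[R]_NX -> 'cV[R]_Ne -> R)
  (j : 'cV[R]_NX -> 'cV[R]_Ne)
  (jdag : 'cV[R]_NX -> 'cV[R]_Ne)
  (ueq : 'cV[R]_NX -> 'cV[R]_NX)
  (I : set R) (xt : R -> 'cV[R]_NX) :
  let SR : 'M[R]_(NX, Ne) := map_mx intr S in
  let X := @posOrth R NX in
  (* Phi primal thermodynamic, Phis its conjugate, gradients mutually inverse *)
  primal_thermo Phi ->
  is_conj_on Phi Phis ->
  (forall y, differentiable Phis y) ->
  (forall x, X x -> grad Phis (grad Phi x) = x) ->
  (forall y, X (grad Phis y) /\ grad Phi (grad Phis y) = y) ->
  (* dissipation functions Psis x, with conjugates Psi x *)
  (forall x, X x -> dissipation (Psis x)) ->
  (forall x, X x -> Psi x = LF_conj (Psis x)) ->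
  (forall x, X x -> forall f, differentiable (Psi x) f) ->
  (forall x, X x -> forall f, grad (Psi x) (grad (Psis x) f) = f) ->
  (forall x, X x -> forall g, grad (Psis x) (grad (Psi x) g) = g) ->
  (* jdag x minimizes Psi x over {j' | -S j' = v(x)}, v(x) = -S j(x) *)
  (forall x, X x ->
     - (SR *m jdag x) = - (SR *m j x) /\
     forall j', - (SR *m j') = - (SR *m j x) -> Psi x (jdag x) <= Psi x j') ->
  (* u_eq(x) : -S^T u_eq(x) = grad Psi_x (jdag x) *)
  (forall x, X x -> - (SR^T *m ueq x) = grad (Psi x) (jdag x)) ->
  let jeq := fun x => grad (Psis x) (- (SR^T *m ueq x)) in
  (* trajectory of xdot = -S j(x) on the time set I *)
  (forall t, I t -> X (xt t) /\ derivable xt t 1 /\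
                    derive1 xt t = - (SR *m j (xt t))) ->
  let xtil := fun t => grad Phis (grad Phi (xt t) + ueq (xt t)) in
  let jeqt := fun t x =>
    grad (Psis x) (SR^T *m grad (fun y => bregman Phi y (xtil t)) x) in
  (forall x, X x -> - (SR *m jeq x) = - (SR *m j x)) /\
  (forall t, I t -> derive1 xt t = - (SR *m jeqt t (xt t))).
Proof.
move=> SR X hPhi hconj dPhis hgPhisPhi hgPhiPhis hdiss hPsi dPsi hPsiPsis hPsisPsi hjdag hueq jeq htraj xtil jeqt.
have P1 : forall x, X x -> -(SR *m jeq x) = -(SR *m j x).
  move=> x Xx; rewrite /jeq hueq // hPsisPsi //; exact: (hjdag x Xx).1.
split => // t It.
have [Xt [_ ->]] := htraj t It.
have dP : differentiable Phi (xt t) by case: hPhi => _ d _ _; apply: d.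
rewrite /jeqt grad_bregman //.
rewrite /xtil (hgPhiPhis _).2.
have -> : grad Phi (xt t) - (grad Phi (xt t) + ueq (xt t)) = - ueq (xt t).
  by rewrite opprD addrA subrr add0r.
rewrite mulmxN.
exact: (esym (P1 _ Xt)).
Qed.
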